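(* Let $F_0$ be a QF-NIA formula, and let $F$ be a linearization of $F_0$ with artificial bounds $B$. Define, for each model $M$ of $F$, $\mathrm{cost}(M)$ to be the number of bounds in $B$ that are not satisfied by $M$. Then $\mathrm{cost}$ is admissible: $\mathrm{cost}(M)\ge 0$ for every model $M$ of $F$, and if $\mathrm{cost}(M)=0$ then $M$ (restricted to the variables of $F_0$) is a model of $F_0$.
   Context: A QF-NIA formula is a quantifier-free CNF formula whose atoms are polynomial inequalities with integer coefficients over integer-valued variables. Artificial bounds are a finite set $B$ of constraints $V\ge L$ or $V\le U$ ($L,U\in\mathbb{Z}$) on variables of $F_0$. A linearization $F$ of $F_0$ with artificial bounds $B$ is a QF-LIA formula obtained as follows. While some non-linear monomial $Q$ occurs, pick a variable $V$ of $Q$ that has both a lower bound $l$ and an upper bound $u$ in $F_0\cup B$. Introduce a fresh integer variable $v_Q$ and replace every occurrence of $Q$ by $v_Q$. Add, for each integer $K$ with $l\le K\le u$, the clause $V=K\rightarrow v_Q=Q[V:=K]$, where $Q[V:=K]$ is $Q$ with $V$ evaluated at $K$. New non-linear monomials appearing in these clauses are processed in the same way. $F$ does not contain the bounds of $B$. A model of $F$ is an integer assignment to all variables of $F$ (original and fresh) satisfying $F$. *)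

(* Defs.v *)
From Stdlib Require List.
From mathcomp Require Import all_boot all_algebra.
Set Implicit Arguments. Unset Strict Implicit. Unset Printing Implicit Defensive.
Import GRing.Theory Num.Theory.
Local Open Scope ring_scope.

Definition var := nat.

(** A monomial is a finite multiset of variables, represented by a list;
    two monomials are identified when they are permutations of each other.
    The empty list is the constant monomial 1. *)
Definition monomial := seq var.

Definition poly := seq (int * monomial).

Inductive atom := AGe of poly & int | ALe of poly & int.

Definition atom_poly (a : atom) : poly :=
  match a with AGe p _ => p | ALe p _ => p end.

Definition clause := seq atom.
Definition cnf := seq clause.

Definition assignment := var -> int.

Definition eval_mono (M : assignment) (m : monomial) : int := \prod_(v <- m) M v.
Definition eval_poly (M : assignment) (p : poly) : int :=
  \sum_(t <- p) t.1 * eval_mono M t.2.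

Definition sat_atom (M : assignment) (a : atom) : bool :=
  match a with
  | AGe p c => c <= eval_poly M p
  | ALe p c => eval_poly M p <= c
  end.
Definition sat_clause (M : assignment) (C : clause) : bool := has (sat_atom M) C.
Definition sat_cnf (M : assignment) (F : cnf) : bool := all (sat_clause M) F.

Definition occurs_mono (Q : monomial) (G : cnf) : Prop :=
  exists C a t, List.In C G /\ List.In a C /\ List.In t (atom_poly a) /\ perm_eq t.2 Q.

Definition occurs_var (v : var) (G : cnf) : Prop :=
  exists C a t, List.In C G /\ List.In a C /\ List.In t (atom_poly a) /\ v \in t.2.

Definition is_linear (G : cnf) : Prop :=
  forall C a t, List.In C G -> List.In a C -> List.In t (atom_poly a) ->
    (size t.2 <= 1)%N.

Definition bound := (bool * (var * int))%type.
Definition LB (v : var) (L : int) : bound := (true, (v, L)).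
Definition UB (v : var) (U : int) : bound := (false, (v, U)).
Definition bound_var (b : bound) : var := b.2.1.

Definition sat_bound (M : assignment) (b : bound) : bool :=
  let: (islow, (v, k)) := b in if islow then k <= M v else M v <= k.

Definition cost (B : seq bound) (M : assignment) : nat :=
  count (fun b => ~~ sat_bound M b) (undup B).

Definition has_lb (F0 : cnf) (B : seq bound) (V : var) (l : int) : Prop :=
  List.In [:: AGe [:: (1, [:: V])] l] F0 \/ LB V l \in B.
Definition has_ub (F0 : cnf) (B : seq bound) (V : var) (u : int) : Prop :=
  List.In [:: ALe [:: (1, [:: V])] u] F0 \/ UB V u \in B.

Definition repl_poly (Q : monomial) (vQ : var) (p : poly) : poly :=
  [seq (if perm_eq t.2 Q then (t.1, [:: vQ]) else t) | t <- p].
Definition repl_atom (Q : monomial) (vQ : var) (a : atom) : atom :=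
  match a with
  | AGe p c => AGe (repl_poly Q vQ p) c
  | ALe p c => ALe (repl_poly Q vQ p) c
  end.
Definition repl_cnf (Q : monomial) (vQ : var) (G : cnf) : cnf :=
  [seq [seq repl_atom Q vQ a | a <- C] | C <- G].

Definition int_range (l u : int) : seq int :=
  if l <= u then [seq l + (i%:Z) | i <- iota 0 (absz (u - l)).+1] else [::].

Definition diseq (V : var) (K : int) : clause :=
  [:: ALe [:: (1, [:: V])] (K - 1); AGe [:: (1, [:: V])] (K + 1)].

(** Q[V:=K] = K^e * m, with e the multiplicity of V in Q and m = Q without V.
    The clause [V = K -> vQ = Q[V:=K]] is encoded in CNF as two clauses
    [V <> K \/ vQ - K^e m <= 0] and [V <> K \/ vQ - K^e m >= 0]. *)
Definition def_clauses (V : var) (Q : monomial) (vQ : var) (K : int) : cnf :=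
  let c := K ^+ (count_mem V Q) in
  let m := filter (predC1 V) Q in
  [:: diseq V K ++ [:: ALe [:: (1, [:: vQ]); (- c, m)] 0];
      diseq V K ++ [:: AGe [:: (1, [:: vQ]); (- c, m)] 0]].

Definition fresh_var (F0 : cnf) (B : seq bound) (G : cnf) (v : var) : Prop :=
  ~ occurs_var v F0 /\ ~ occurs_var v G /\ all (fun b => bound_var b != v) B.

Definition linstep (F0 : cnf) (B : seq bound) (G G' : cnf) : Prop :=
  exists (Q : monomial) (V : var) (l u : int) (vQ : var),
    (1 < size Q)%N /\ occurs_mono Q G /\ V \in Q /\
    has_lb F0 B V l /\ has_ub F0 B V u /\ fresh_var F0 B G vQ /\
        G' = repl_cnf Q vQ G ++ flatten [seq def_clauses V Q vQ K | K <- int_range l u].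

Inductive lin_reach (F0 : cnf) (B : seq bound) : cnf -> cnf -> Prop :=
  | lin_refl G : lin_reach F0 B G G
  | lin_step G G' G'' : linstep F0 B G G' -> lin_reach F0 B G' G'' -> lin_reach F0 B G G''.

Definition linearization (F0 : cnf) (B : seq bound) (F : cnf) : Prop :=
  lin_reach F0 B F0 F /\ is_linear F.

(* Main.v *)
Require Import Defs.
From mathcomp Require Import all_boot all_algebra zify.
Import GRing.Theory Num.Theory.
Local Open Scope ring_scope.

Lemma eval_mono_split M V (Q : monomial) :
  eval_mono M Q = M V ^+ count_mem V Q * eval_mono M (filter (predC1 V) Q).
Proof.
rewrite /eval_mono; elim: Q => [|x Q IH] /=; first by rewrite !big_nil mul1r.
rewrite big_cons IH; case: eqP => [->|/eqP hx] /=.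
  by rewrite add1n exprS mulrA.
by rewrite big_cons mulrCA.
Qed.

Lemma repl_poly_eval M Q vQ p : M vQ = eval_mono M Q ->
  eval_poly M (repl_poly Q vQ p) = eval_poly M p.
Proof.
move=> h; rewrite /eval_poly /repl_poly big_map; apply: eq_bigr => t _.
case: ifP => // hp /=; congr (_ * _).
by rewrite /eval_mono big_cons big_nil mulr1 h (perm_big _ hp).
Qed.

Lemma repl_cnf_sat M Q vQ G : M vQ = eval_mono M Q ->
  sat_cnf M (repl_cnf Q vQ G) = sat_cnf M G.
Proof.
move=> h; rewrite /sat_cnf /repl_cnf all_map; apply: eq_all => C /=.
rewrite /sat_clause has_map; apply: eq_has => a /=.
by case: a => p c /=; rewrite repl_poly_eval.
Qed.

Lemma all_flatten_map (A B : Type) (a : pred A) (f : B -> seq A) (s : seq B) (y : B) :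
  all a (flatten [seq f x | x <- s]) -> List.In y s -> all a (f y).
Proof.
elim: s => //= x s IH; rewrite all_cat => /andP[h1 h2] [<-|hy] //; exact: IH.
Qed.

Lemma in_range (l u k : int) : l <= k -> k <= u -> List.In k (int_range l u).
Proof.
move=> hl hu; rewrite /int_range ifT; last lia.
apply List.in_map_iff; exists (absz (k - l)); split; first lia.
apply List.in_seq; lia.
Qed.

Lemma def_ok M V Q vQ l u : l <= M V -> M V <= u ->
  sat_cnf M (flatten [seq def_clauses V Q vQ K | K <- int_range l u]) ->
  M vQ = eval_mono M Q.
Proof.
move=> hl hu H; have := @all_flatten_map _ _ _ _ _ _ H (in_range _ _ _ hl hu).
rewrite /= /sat_clause /= /eval_poly !big_cons !big_nil /eval_mono !big_cons !big_nil.
have E := eval_mono_split M V Q; rewrite /eval_mono in E; rewrite E.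
rewrite /= !mul1r !mulr1 !addr0.
set P := \prod_(_ <- _) _; set c := _ ^+ _.
rewrite mulNr orbF orbF => /andP[h1 /andP[h2 _]].
move: h1 h2 => /orP[|/orP[]] h1 /orP[|/orP[]] h2; lia.
Qed.

Lemma sat_in M G C : sat_cnf M G -> List.In C G -> sat_clause M C.
Proof. elim: G => //= C' G IH /andP[h1 h2] [<-|h] //; exact: IH. Qed.

Definition fixedc (c : clause) := forall Q vQ, (1 < size Q)%N -> [seq repl_atom Q vQ a | a <- c] = c.

Lemma fixed_lb V l : fixedc [:: AGe [:: (1, [:: V])] l].
Proof.
move=> Q vQ hQ /=; rewrite /repl_poly /=.
case: ifP => // /perm_size /= hs; by rewrite -hs in hQ.
Qed.

Lemma fixed_ub V l : fixedc [:: ALe [:: (1, [:: V])] l].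
Proof.
move=> Q vQ hQ /=; rewrite /repl_poly /=.
case: ifP => // /perm_size /= hs; by rewrite -hs in hQ.
Qed.

Lemma reach_keep F0 B G G'' c : lin_reach F0 B G G'' -> fixedc c ->
  List.In c G -> List.In c G''.
Proof.
move=> h hc; elim: h => // {}G G' {}G'' [Q [V [l [u [vQ [hQ [_ [_ [_ [_ [_ ->]]]]]]]]]]] _ IH hin.
apply: IH; apply: List.in_or_app; left.
rewrite /repl_cnf -(hc Q vQ hQ); exact: List.in_map.
Qed.

Lemma reach_sat F0 B G G'' M :
  (forall V l, has_lb F0 B V l -> l <= M V) ->
  (forall V u, has_ub F0 B V u -> M V <= u) ->
  lin_reach F0 B G G'' -> sat_cnf M G'' -> sat_cnf M G.
Proof.
move=> hL hU h; elim: h => // {}G G' {}G'' [Q [V [l [u [vQ [hQ [_ [_ [hl [hu [_ ->]]]]]]]]]]] _ IH /IH.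
rewrite /sat_cnf all_cat => /andP[h1 h2].
have E := def_ok _ _ _ _ _ _ (hL _ _ hl) (hU _ _ hu) h2.
by move: h1; rewrite -/(sat_cnf M _) repl_cnf_sat.
Qed.

Theorem lemma3p2 (F0 : cnf) (B : seq bound) (F : cnf) :
  (forall b, b \in B -> occurs_var (bound_var b) F0) ->
  linearization F0 B F ->
  forall M : assignment, sat_cnf M F ->
    (0 <= cost B M)%N /\ (cost B M = 0%N -> sat_cnf M F0).
Proof.
move=> _ [hr _] M hF; split => // hc.
have hB : forall b, b \in B -> sat_bound M b.
  move=> b hb; apply: contraT => nb.
  have : (0 < cost B M)%N by rewrite /cost -has_count; apply/hasP; exists b; rewrite ?mem_undup.
  by rewrite hc.
apply: (reach_sat _ _ _ _ M _ _ hr hF).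
- move=> V l [h|h].
    have := @sat_in M F _ hF (reach_keep _ _ _ _ _ hr (@fixed_lb V l) h).
    by rewrite /sat_clause /= /eval_poly big_cons big_nil /eval_mono big_cons big_nil mul1r mulr1 addr0 orbF.
  exact: (hB _ h).
- move=> V l [h|h].
    have := @sat_in M F _ hF (reach_keep _ _ _ _ _ hr (@fixed_ub V l) h).
    by rewrite /sat_clause /= /eval_poly big_cons big_nil /eval_mono big_cons big_nil mul1r mulr1 addr0 orbF.
  exact: (hB _ h).
Qed.
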